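(* Let $\kappa>0$, $g>0$, $p\ge0$, $\delta^2>0$, and let $h$ be a random variable with Gamma distribution of shape $\kappa$ and scale $g/\kappa$. Let $c=\log_2(1+ph/\delta^2)$, $\bar\gamma=pg/\delta^2$ and $\beta=e^{\psi(\kappa)}/\kappa$, where $\psi$ is the digamma function. Then $$\mathbb{E}\{c\}\ \ge\ \bar c\triangleq\log_2(1+\beta\bar\gamma).$$ Moreover, the bound is asymptotically tight: $\mathbb{E}\{c\}-\bar c\to0$ as $\bar\gamma\to\infty$ or as $\kappa\to\infty$. *)

(* Defs.v *)
From Stdlib Require Import Reals.
From Coquelicot Require Import Coquelicot.
Open Scope R_scope.

Definition Gamma_fun (k : R) : R :=
  RInt_gen (fun t => Rpower t (k - 1) * exp (- t))
           (at_right 0) (Rbar_locally p_infty).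

Definition digamma (k : R) : R := Derive Gamma_fun k / Gamma_fun k.

Definition gamma_pdf (k th x : R) : R :=
  Rpower x (k - 1) * exp (- x / th) / (Gamma_fun k * Rpower th k).

Definition gamma_expect (k th : R) (f : R -> R) : R :=
  RInt_gen (fun x => f x * gamma_pdf k th x)
           (at_right 0) (Rbar_locally p_infty).

Definition log2 (x : R) : R := ln x / ln 2.

Definition capacity (p d2 h : R) : R := log2 (1 + p * h / d2).

Definition Ec (kappa g p d2 : R) : R :=
  gamma_expect kappa (g / kappa) (capacity p d2).

Definition gbar (g p d2 : R) : R := p * g / d2.

Definition beta (kappa : R) : R := exp (digamma kappa) / kappa.

Definition cbar (kappa g p d2 : R) : R := log2 (1 + beta kappa * gbar g p d2).

(* Main.v *)
Require Import Defs.
From Stdlib Require Import Reals Lra Classical.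
From Coquelicot Require Import Coquelicot.
Open Scope R_scope.

Lemma Rabs_le_inv x b : Rabs x <= b -> - b <= x <= b.
Proof. unfold Rabs; destruct Rcase_abs; intros; lra. Qed.

Definition GI (f : R -> R) (l : R) :=
  is_RInt_gen f (at_right 0) (Rbar_locally p_infty) l.

Definition Pcont (f : R -> R) := forall x, 0 < x -> continuous f x.

Lemma at_right0_ex (P : R -> Prop) : at_right 0 P -> exists d:posreal, forall y, 0 < y < d -> P y.
Proof.
intros [d Hd]. exists d. intros y Hy. apply Hd. 2: lra.
unfold ball; simpl; unfold AbsRing_ball, abs, minus, plus, opp; simpl.
rewrite Rabs_pos_eq; lra.
Qed.

Lemma at_right0_mk (P : R -> Prop) (d : R) : 0 < d -> (forall y, 0 < y < d -> P y) -> at_right 0 P.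
Proof.
intros Hd H. exists (mkposreal d Hd). intros y Hy Hy0. apply H. split; auto.
unfold ball in Hy; simpl in Hy; unfold AbsRing_ball, abs, minus, plus, opp in Hy; simpl in Hy.
rewrite Ropp_0, Rplus_0_r, Rabs_pos_eq in Hy; lra.
Qed.

Lemma Pcont_ex_RInt f a b : Pcont f -> 0 < a -> 0 < b -> ex_RInt f a b.
Proof.
intros Hf Ha Hb. apply (ex_RInt_continuous (V:=R_CompleteNormedModule)). intros z Hz. apply Hf.
destruct Hz as [Hz _]. eapply Rlt_le_trans. 2: exact Hz.
unfold Rmin; destruct Rle_dec; lra.
Qed.

Lemma RInt_mono_sub h a b a' b' : Pcont h -> (forall x, 0 < x -> 0 <= h x) ->
  0 < a' -> a' <= a -> a <= b -> b <= b' -> RInt h a b <= RInt h a' b'.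
Proof.
intros Hc Hp H0 H1 H2 H3.
assert (E1 : RInt h a' b' = RInt h a' a + (RInt h a b + RInt h b b')).
{ rewrite <- (RInt_Chasles h a' a b'); try (apply Pcont_ex_RInt; auto; lra).
  rewrite <- (RInt_Chasles h a b b'); try (apply Pcont_ex_RInt; auto; lra).
  reflexivity. }
rewrite E1.
assert (0 <= RInt h a' a). { apply RInt_ge_0; auto. apply Pcont_ex_RInt; auto; lra. intros; apply Hp; lra. }
assert (0 <= RInt h b b'). { apply RInt_ge_0; auto. apply Pcont_ex_RInt; auto; lra. intros; apply Hp; lra. }
lra.
Qed.

Lemma GI_partial_le h G : Pcont h -> (forall x, 0 < x -> 0 <= h x) -> GI h G ->
  forall a b, 0 < a -> a <= b -> RInt h a b <= G.
Proof.
intros Hc Hp HG a b Ha Hab.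
apply Rnot_lt_le; intro Hlt.
assert (He : 0 < RInt h a b - G) by lra.
specialize (HG (ball G (mkposreal _ He)) (locally_ball _ _)).
destruct HG as [Q R' HQ HR HQR].
apply at_right0_ex in HQ. destruct HQ as [d Hd]. destruct HR as [M HM].
set (a' := Rmin (a/2) (d/2)). set (b' := Rmax (b+1) (M+1)).
assert (Ha' : 0 < a' < d). { unfold a', Rmin; destruct Rle_dec; destruct d; simpl in *; lra. }
assert (Ha'2 : a' <= a). { unfold a', Rmin; destruct Rle_dec; destruct d; simpl in *; lra. }
assert (Hb' : M < b' /\ b <= b'). { unfold b', Rmax; destruct Rle_dec; lra. }
destruct (HQR a' b' (Hd a' Ha') (HM b' (proj1 Hb'))) as [y [Hy1 Hy2]].
simpl in Hy1. apply (is_RInt_unique (V:=R_CompleteNormedModule)) in Hy1. subst y.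
pose proof (RInt_mono_sub h a b a' b' Hc Hp (proj1 Ha') Ha'2 Hab (proj2 Hb')).
unfold ball in Hy2; simpl in Hy2; unfold AbsRing_ball, abs, minus, plus, opp in Hy2; simpl in Hy2.
apply Rabs_def2 in Hy2. lra.
Qed.

Lemma GI_mono_exists f B : Pcont f -> (forall x, 0 < x -> 0 <= f x) ->
  (forall a b, 0 < a -> a <= b -> RInt f a b <= B) -> exists l, GI f l.
Proof.
intros Hc Hp HB.
set (E := fun y => exists a b, 0 < a /\ a <= b /\ y = RInt f a b).
assert (Hbd : bound E). { exists B. intros y [a [b [H1 [H2 H3]]]]. subst. apply HB; auto. }
assert (Hne : exists y, E y). { exists (RInt f 1 1). exists 1, 1. repeat split; lra. }
destruct (completeness E Hbd Hne) as [S [HS1 HS2]].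
exists S. intros P HP.
destruct HP as [eps Heps].
assert (Hex : exists a b, 0 < a /\ a <= b /\ S - eps < RInt f a b).
{ apply Classical_Pred_Type.not_all_not_ex. intro Hn.
  assert (S <= S - eps). { apply HS2. intros y [a [b [H1 [H2 H3]]]]. subst.
    specialize (Hn a). apply Classical_Pred_Type.not_ex_all_not with (n := b) in Hn.
    apply Rnot_lt_le. intro. apply Hn. auto. }
  destruct eps; simpl in *; lra. }
destruct Hex as [a0 [b0 [H1 [H2 H3]]]].
apply Filter_prod with (Q := fun a => 0 < a < a0) (R := fun b => b0 < b).
- apply at_right0_mk with a0; auto.
- exists b0. auto.
- intros a b Ha Hb. exists (RInt f a b). split.
  + simpl. apply (RInt_correct (V:=R_CompleteNormedModule)). apply Pcont_ex_RInt; auto; lra.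
  + apply Heps. unfold ball; simpl; unfold AbsRing_ball, abs, minus, plus, opp; simpl.
    assert (RInt f a b <= S). { apply HS1. exists a, b. repeat split; lra. }
    pose proof (RInt_mono_sub f a0 b0 a b Hc Hp (proj1 Ha) (Rlt_le _ _ (proj2 Ha)) H2 (Rlt_le _ _ Hb)).
    apply Rabs_def1; lra.
Qed.
Lemma GI_ext f g l : (forall x, 0 < x -> f x = g x) -> GI f l -> GI g l.
Proof.
intros H Hf. apply (is_RInt_gen_ext (V:=R_NormedModule)) with f; auto.
apply Filter_prod with (Q := fun a => 0 < a < 1) (R := fun b => 1 < b).
- apply at_right0_mk with 1; auto; lra.
- exists 1; auto.
- intros a b Ha Hb x Hx. simpl in Hx. apply H.
  destruct Hx as [Hx _]. eapply Rle_lt_trans. 2: exact Hx. unfold Rmin; destruct Rle_dec; lra.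
Qed.

Lemma GI_plus f g a b : GI f a -> GI g b -> GI (fun x => f x + g x) (a + b).
Proof. intros Hf Hg. exact (is_RInt_gen_plus (V:=R_NormedModule) f g a b Hf Hg). Qed.

Lemma GI_scal k f a : GI f a -> GI (fun x => k * f x) (k * a).
Proof. intros Hf. exact (is_RInt_gen_scal (V:=R_NormedModule) f k a Hf). Qed.

Lemma GI_opp f a : GI f a -> GI (fun x => - f x) (- a).
Proof. intros Hf. exact (is_RInt_gen_opp (V:=R_NormedModule) f a Hf). Qed.

Lemma GI_minus f g a b : GI f a -> GI g b -> GI (fun x => f x - g x) (a - b).
Proof. intros Hf Hg. apply GI_plus; auto. apply GI_opp; auto. Qed.

Lemma GI_RInt_gen f a : GI f a -> RInt_gen f (at_right 0) (Rbar_locally p_infty) = a.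
Proof. intros Ha. exact (@is_RInt_gen_unique R_CompleteNormedModule _ _ (Proper_StrongProper _ (at_right_proper_filter 0)) (Proper_StrongProper _ (Rbar_locally_filter p_infty)) f a Ha). Qed.

Lemma GI_unique f a b : GI f a -> GI f b -> a = b.
Proof.
intros Ha Hb. rewrite <- (GI_RInt_gen f a Ha). rewrite <- (GI_RInt_gen f b Hb). reflexivity.
Qed.

Lemma GI_nonneg f a : (forall x, 0 < x -> 0 <= f x) -> GI f a -> 0 <= a.
Proof.
intros Hp Ha.
assert (Abs : Rabs a <= a).
{ apply (@RInt_gen_norm R_CompleteNormedModule _ _ (at_right_proper_filter 0) (Rbar_locally_filter p_infty) f f a a); auto.
  - apply Filter_prod with (Q := fun a => 0 < a < 1) (R := fun b => 1 < b).
    + apply at_right0_mk with 1; auto; lra.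
    + exists 1; auto.
    + intros; simpl; lra.
  - apply Filter_prod with (Q := fun a => 0 < a < 1) (R := fun b => 1 < b).
    + apply at_right0_mk with 1; auto; lra.
    + exists 1; auto.
    + intros u v Hu Hv x Hx. simpl in Hx. unfold norm; simpl; unfold abs; simpl.
      rewrite Rabs_pos_eq; [lra|]. apply Hp; lra. }
pose proof (Rabs_pos a). lra.
Qed.

Lemma GI_le f g a b : (forall x, 0 < x -> f x <= g x) -> GI f a -> GI g b -> a <= b.
Proof.
intros H Ha Hb. assert (0 <= b - a). { apply GI_nonneg with (fun x => g x - f x).
  intros; specialize (H x H0); lra. apply GI_minus; auto. } lra.
Qed.

Lemma Pcont_plus f g : Pcont f -> Pcont g -> Pcont (fun x => f x + g x).
Proof. intros Hf Hg x Hx. exact (continuous_plus (V:=R_NormedModule) f g x (Hf x Hx) (Hg x Hx)). Qed.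

Lemma Pcont_opp f : Pcont f -> Pcont (fun x => - f x).
Proof. intros Hf x Hx. exact (continuous_opp (V:=R_NormedModule) f x (Hf x Hx)). Qed.

Lemma GI_dom f g G : Pcont f -> Pcont g -> (forall x, 0 < x -> Rabs (f x) <= g x) -> GI g G ->
  exists l, GI f l.
Proof.
intros Hf Hg Hd HG.
assert (Hgp : forall x, 0 < x -> 0 <= g x). { intros x Hx. specialize (Hd x Hx). pose proof (Rabs_pos (f x)). lra. }
destruct (GI_mono_exists (fun x => f x + g x) (2 * G)) as [l Hl].
- apply Pcont_plus; auto.
- intros x Hx. specialize (Hd x Hx). apply Rabs_le_inv in Hd. lra.
- intros a b Ha Hab.
  assert (E : RInt (fun x => f x + g x) a b = RInt f a b + RInt g a b).
  { exact (RInt_plus (V:=R_CompleteNormedModule) f g a b (Pcont_ex_RInt f a b Hf Ha ltac:(lra)) (Pcont_ex_RInt g a b Hg Ha ltac:(lra))). }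
  rewrite E.
  assert (RInt f a b <= RInt g a b).
  { apply RInt_le; auto; try (apply Pcont_ex_RInt; auto; lra). intros x Hx. specialize (Hd x ltac:(lra)). apply Rabs_le_inv in Hd. lra. }
  pose proof (GI_partial_le g G Hg Hgp HG a b Ha Hab). lra.
- exists (l - G). apply GI_ext with (fun x => (f x + g x) - g x). intros; ring.
  apply GI_minus; auto.
Qed.

Lemma GI_scale K L th : 0 < th -> GI (fun y => th * K (th * y)) L -> GI K L.
Proof.
intros Hth H P HP. specialize (H P HP). destruct H as [Q R' HQ HR HQR].
apply Filter_prod with (Q := fun a => Q (a / th)) (R := fun b => R' (b / th)).
- apply at_right0_ex in HQ. destruct HQ as [d Hd]. apply at_right0_mk with (d * th).
  destruct d; simpl; nra. intros y Hy. apply Hd. split. apply Rdiv_lt_0_compat; lra.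
  apply Rmult_lt_reg_r with th; auto. field_simplify; lra.
- destruct HR as [M HM]. exists (M * th). intros x Hx. apply HM.
  apply Rmult_lt_reg_r with th; auto. field_simplify; lra.
- intros a b Ha Hb. destruct (HQR _ _ Ha Hb) as [y [Hy Py]]. exists y. split; auto.
  simpl in Hy |- *.
  pose proof (is_RInt_comp_lin (V:=R_NormedModule) (fun y => th * K (th * y)) (/ th) 0 a b y) as Hc.
  apply (is_RInt_ext (V:=R_NormedModule)) with (fun z : R => scal (/ th) ((fun y => th * K (th * y)) (/ th * z + 0))).
  + intros x _. unfold scal; simpl; unfold mult; simpl. field_simplify_eq. 2: lra.
    replace (th * (/ th * x + 0)) with x by (field; lra). ring.
  + apply Hc. replace (/ th * a + 0) with (a / th) by (unfold Rdiv; ring).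
    replace (/ th * b + 0) with (b / th) by (unfold Rdiv; ring). exact Hy.
Qed.

Definition wf (s : R) := fun t => Rpower t (s - 1) * exp (- t).

Lemma exp_sub_ln s t : 0 < t -> exp ((s - 1) * ln t) = exp (s * ln t) / t.
Proof.
intros Ht. replace ((s - 1) * ln t) with (s * ln t + - ln t) by ring.
rewrite exp_plus, exp_Ropp, exp_ln; auto.
Qed.

Lemma wf_cont s : Pcont (wf s).
Proof. intros x Hx. apply (ex_derive_continuous (V:=R_NormedModule)). unfold wf, Rpower. auto_derive. auto. Qed.

Lemma wf_pos s t : 0 < wf s t.
Proof. unfold wf, Rpower. apply Rmult_lt_0_compat; apply exp_pos. Qed.

Lemma Rpower_cont s : Pcont (fun t => Rpower t s).
Proof. intros x Hx. apply (ex_derive_continuous (V:=R_NormedModule)). unfold Rpower. auto_derive. auto. Qed.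

Lemma pow_int s a : 0 < s -> 0 < a -> a <= 1 -> RInt (fun t => Rpower t (s - 1)) a 1 <= 1 / s.
Proof.
intros Hs Ha Ha1.
assert (H : is_RInt (fun t => Rpower t (s - 1)) a 1 (minus ((fun t => Rpower t s / s) 1) ((fun t => Rpower t s / s) a))).
{ apply (is_RInt_derive (V:=R_CompleteNormedModule) (fun t => Rpower t s / s)).
  - intros x Hx. assert (0 < x). { destruct Hx as [Hx _]. eapply Rlt_le_trans. 2: exact Hx. unfold Rmin; destruct Rle_dec; lra. }
    unfold Rpower. auto_derive. auto. rewrite exp_sub_ln; auto. field. lra.
  - intros x Hx. apply Rpower_cont. destruct Hx as [Hx _]. eapply Rlt_le_trans. 2: exact Hx. unfold Rmin; destruct Rle_dec; lra. }
apply (is_RInt_unique (V:=R_CompleteNormedModule)) in H. rewrite H.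
unfold minus, plus, opp; simpl.
replace (Rpower 1 s) with 1 by (unfold Rpower; rewrite ln_1, Rmult_0_r, exp_0; auto).
assert (0 < Rpower a s) by (unfold Rpower; apply exp_pos).
unfold Rdiv. assert (0 < / s) by (apply Rinv_0_lt_compat; lra). nra.
Qed.

Lemma inv2_int K b : 0 <= K -> 1 <= b -> RInt (fun t => K / (t * t)) 1 b <= K.
Proof.
intros HK Hb.
assert (H : is_RInt (fun t => K / (t * t)) 1 b (minus ((fun t => - K / t) b) ((fun t => - K / t) 1))).
{ apply (is_RInt_derive (V:=R_CompleteNormedModule) (fun t => - K / t)).
  - intros x Hx. assert (0 < x). { destruct Hx as [Hx _]. eapply Rlt_le_trans. 2: exact Hx. unfold Rmin; destruct Rle_dec; lra. }
    auto_derive. lra. field. lra.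
  - intros x Hx. assert (0 < x). { destruct Hx as [Hx _]. eapply Rlt_le_trans. 2: exact Hx. unfold Rmin; destruct Rle_dec; lra. }
    apply (ex_derive_continuous (V:=R_NormedModule)). auto_derive. nra. }
apply (is_RInt_unique (V:=R_CompleteNormedModule)) in H. rewrite H.
unfold minus, plus, opp; simpl.
assert (0 <= K / b) by (apply Rdiv_le_0_compat; lra).
replace (- K / b + - (- K / 1)) with (K - K / b) by (field; lra). lra.
Qed.

Definition Kc (s : R) := exp ((s + 1) * ln (s + 1) - (s + 1)).

Lemma ln_le_sub1 x : 0 < x -> ln x <= x - 1.
Proof. intros Hx. pose proof (exp_ineq1_le (ln x)). rewrite exp_ln in H; auto. lra. Qed.

Lemma exp_le x y : x <= y -> exp x <= exp y.
Proof. intros H. destruct (Rle_lt_or_eq_dec _ _ H). left; apply exp_increasing; auto. subst; lra. Qed.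

Lemma wf_exp s t : 0 < t -> wf s t = exp ((s - 1) * ln t - t).
Proof. intros Ht. unfold wf, Rpower. unfold Rminus at 2. rewrite exp_plus. reflexivity. Qed.

Lemma wf_le_pow s t : 0 < t -> wf s t <= Rpower t (s - 1).
Proof.
intros Ht. rewrite wf_exp; auto. unfold Rpower. apply exp_le. lra.
Qed.

Lemma wf_le_inv2 s t : 0 < s -> 0 < t -> wf s t <= Kc s / (t * t).
Proof.
intros Hs Ht. rewrite wf_exp; auto. unfold Kc.
replace (t * t) with (exp (2 * ln t)).
2:{ replace (2 * ln t) with (ln t + ln t) by ring. rewrite exp_plus, exp_ln; auto. }
unfold Rdiv. rewrite <- exp_Ropp, <- exp_plus. apply exp_le.
set (m := s + 1).
assert (Hm : 0 < m) by (unfold m; lra).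
pose proof (ln_le_sub1 (t / m) ltac:(apply Rdiv_lt_0_compat; lra)).
unfold Rdiv in H. rewrite ln_mult, ln_Rinv in H; try lra.
2: apply Rinv_0_lt_compat; lra.
assert (m * (ln t - ln m) <= m * (t * / m - 1)). { apply Rmult_le_compat_l; lra. }
replace (m * (t * / m - 1)) with (t - m) in H0 by (field; lra).
unfold m in *. nra.
Qed.

Lemma Gamma_GI s : 0 < s -> GI (wf s) (Gamma_fun s).
Proof.
intros Hs.
destruct (GI_mono_exists (wf s) (1 / s + Kc s)) as [l Hl].
- apply wf_cont.
- intros; left; apply wf_pos.
- intros a b Ha Hab.
  set (a' := Rmin a 1). set (b' := Rmax b 1).
  assert (Ha' : 0 < a' <= 1 /\ a' <= a) by (unfold a', Rmin; destruct Rle_dec; lra).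
  assert (Hb' : 1 <= b' /\ b <= b') by (unfold b', Rmax; destruct Rle_dec; lra).
  eapply Rle_trans. apply (RInt_mono_sub (wf s) a b a' b'); try lra. apply wf_cont. intros; left; apply wf_pos.
  rewrite <- (RInt_Chasles (V:=R_CompleteNormedModule) (wf s) a' 1 b'); try (apply Pcont_ex_RInt; [apply wf_cont| lra | lra]).
  unfold plus; simpl.
  assert (RInt (wf s) a' 1 <= RInt (fun t => Rpower t (s - 1)) a' 1).
  { apply RInt_le; try lra; try (apply Pcont_ex_RInt; [try apply wf_cont; try apply Rpower_cont| lra | lra]).
    intros; apply wf_le_pow; lra. }
  assert (RInt (wf s) 1 b' <= RInt (fun t => Kc s / (t * t)) 1 b').
  { apply RInt_le; try lra; try (apply Pcont_ex_RInt; [apply wf_cont| lra | lra]).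
    apply (ex_RInt_continuous (V:=R_CompleteNormedModule)). intros z Hz. assert (0 < z). { destruct Hz as [Hz _]. eapply Rlt_le_trans. 2: exact Hz. unfold Rmin; destruct Rle_dec; lra. }
    apply (ex_derive_continuous (V:=R_NormedModule)). auto_derive. nra.
    intros; apply wf_le_inv2; lra. }
  pose proof (pow_int s a' Hs (proj1 (proj1 Ha')) (proj2 (proj1 Ha'))).
  pose proof (inv2_int (Kc s) b' (Rlt_le _ _ (exp_pos _)) (proj1 Hb')).
  lra.
- unfold Gamma_fun. pose proof (GI_RInt_gen _ _ Hl) as E. unfold wf in E. rewrite E. exact Hl.
Qed.

Lemma Gamma_pos s : 0 < s -> 0 < Gamma_fun s.
Proof.
intros Hs. pose proof (GI_partial_le (wf s) _ (wf_cont s) (fun x _ => Rlt_le _ _ (wf_pos s x)) (Gamma_GI s Hs) 1 2 ltac:(lra) ltac:(lra)).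
assert (0 < RInt (wf s) 1 2). { apply RInt_gt_0. lra. intros; apply wf_pos. intros; apply wf_cont; lra. }
lra.
Qed.

Lemma GI_deriv F f la lb : (forall x, 0 < x -> is_derive F x (f x)) -> Pcont f ->
  (forall eps, 0 < eps -> exists d, 0 < d /\ forall a, 0 < a < d -> Rabs (F a - la) < eps) ->
  (forall eps, 0 < eps -> exists M, forall b, M < b -> Rabs (F b - lb) < eps) ->
  GI f (lb - la).
Proof.
intros Hd Hc Ha Hb P [eps HP].
assert (He2 : 0 < eps / 2) by (destruct eps; simpl; lra).
destruct (Ha _ He2) as [d [Hd0 Hd1]]. destruct (Hb _ He2) as [M HM].
apply Filter_prod with (Q := fun a => 0 < a < d) (R := fun b => Rmax M 0 < b).
- apply at_right0_mk with d; auto.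
- exists (Rmax M 0); auto.
- intros a b Hqa Hrb.
  assert (Hb0 : 0 < b /\ M < b) by (unfold Rmax in Hrb; destruct Rle_dec; lra).
  exists (F b - F a). split.
  + simpl.
    pose proof (is_RInt_derive (V:=R_CompleteNormedModule) F f a b) as H.
    apply H.
    * intros x Hx. apply Hd. destruct Hx as [Hx _]. eapply Rlt_le_trans. 2: exact Hx. unfold Rmin; destruct Rle_dec; lra.
    * intros x Hx. apply Hc. destruct Hx as [Hx _]. eapply Rlt_le_trans. 2: exact Hx. unfold Rmin; destruct Rle_dec; lra.
  + apply HP. unfold ball; simpl; unfold AbsRing_ball, abs, minus, plus, opp; simpl.
    specialize (Hd1 a Hqa). specialize (HM b (proj2 Hb0)).
    apply Rabs_def2 in Hd1. apply Rabs_def2 in HM. apply Rabs_def1; lra.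
Qed.

Lemma Rpower_lt_eps s eps t : 0 < s -> 0 < eps -> 0 < t < exp (ln eps / s) -> Rpower t s < eps.
Proof.
intros Hs He Ht. unfold Rpower. rewrite <- (exp_ln eps) by auto. apply exp_increasing.
assert (ln t < ln eps / s). { rewrite <- (ln_exp (ln eps / s)). apply ln_increasing; lra. }
apply Rmult_lt_compat_l with (r := s) in H; auto. field_simplify in H; lra.
Qed.

Lemma Gamma_rec s : 0 < s -> Gamma_fun (s + 1) = s * Gamma_fun s.
Proof.
intros Hs.
assert (H : GI (fun t => s * wf s t - wf (s + 1) t) (0 - 0)).
{ apply GI_deriv with (F := fun t => Rpower t s * exp (- t)).
  - intros x Hx. unfold wf, Rpower. auto_derive. auto.
    replace (s + 1 - 1) with s by ring. rewrite exp_sub_ln; auto. field. lra.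
  - intros x Hx. apply (continuous_minus (V:=R_NormedModule)).
    apply (continuous_scal_r (V:=R_NormedModule)). apply wf_cont; auto. apply wf_cont; auto.
  - intros eps He. exists (Rmin 1 (exp (ln eps / s))). split.
    unfold Rmin; destruct Rle_dec; [lra | apply exp_pos].
    intros a Ha. rewrite Rminus_0_r. rewrite Rabs_pos_eq.
    2: { apply Rmult_le_pos; [unfold Rpower|]; left; apply exp_pos. }
    assert (exp (- a) <= 1). { rewrite <- exp_0. apply exp_le. lra. }
    assert (Rpower a s < eps). { apply Rpower_lt_eps; auto. split. lra. eapply Rlt_le_trans. apply Ha. apply Rmin_r. }
    assert (0 < Rpower a s) by (unfold Rpower; apply exp_pos). nra.
  - intros eps He. exists (Rmax 1 (Kc (s + 1) / eps)). intros b Hb.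
    assert (Hb1 : 1 < b /\ Kc (s + 1) / eps < b) by (unfold Rmax in Hb; destruct Rle_dec; lra).
    rewrite Rminus_0_r. rewrite Rabs_pos_eq.
    2: { apply Rmult_le_pos; [unfold Rpower|]; left; apply exp_pos. }
    pose proof (wf_le_inv2 (s + 1) b ltac:(lra) ltac:(lra)). unfold wf in H.
    replace (s + 1 - 1) with s in H by ring.
    eapply Rle_lt_trans. apply H.
    assert (Kc (s + 1) < eps * b). { destruct Hb1 as [_ Hb2]. apply Rmult_lt_compat_l with (r := eps) in Hb2; auto.
      unfold Rdiv in Hb2. field_simplify in Hb2; lra. }
    apply Rmult_lt_reg_r with (b * b). nra. field_simplify. 2: lra.
    assert (0 < Kc (s + 1)) by (unfold Kc; apply exp_pos). nra. }
assert (H2 : GI (fun t => s * wf s t - wf (s + 1) t) (s * Gamma_fun s - Gamma_fun (s + 1))).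
{ apply GI_minus. apply GI_scal. apply Gamma_GI; auto. apply Gamma_GI; lra. }
pose proof (GI_unique _ _ _ H H2). lra.
Qed.

Lemma ln_bound d t : 0 < d -> 0 < t -> d * Rabs (ln t) <= exp (d * ln t) + exp (- (d * ln t)).
Proof.
intros Hd Ht. pose proof (exp_ineq1_le (d * ln t)). pose proof (exp_ineq1_le (- (d * ln t))).
pose proof (exp_pos (d * ln t)). pose proof (exp_pos (- (d * ln t))).
unfold Rabs; destruct Rcase_abs; nra.
Qed.

Lemma exp_taylor u : 0 <= exp u - 1 - u <= u * u * exp (Rabs u).
Proof.
pose proof (exp_ineq1_le u). pose proof (exp_ineq1_le (- u)).
split. lra.
assert (E : exp u * exp (- u) = 1). { rewrite <- exp_plus. replace (u + - u) with 0 by ring. apply exp_0. }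
pose proof (exp_pos u).
assert (H2 : exp u - 1 <= u * exp u). { nra. }
unfold Rabs; destruct Rcase_abs.
- assert (1 <= exp (- u)). { rewrite <- exp_0. apply exp_le. lra. }
  assert (1 - exp u <= - u) by lra. nra.
- assert (1 <= exp u). { rewrite <- exp_0. apply exp_le. lra. } nra.
Qed.

Lemma lnw_cont s : Pcont (fun t => ln t * wf s t).
Proof. intros x Hx. apply (ex_derive_continuous (V:=R_NormedModule)). unfold wf, Rpower. auto_derive. auto. Qed.

Lemma wf_shift s a t : 0 < t -> wf (s + a) t = exp (a * ln t) * wf s t.
Proof. intros Ht. rewrite !wf_exp; auto. rewrite <- exp_plus. f_equal. ring. Qed.

Lemma lnw_ex s : 0 < s -> exists I, GI (fun t => ln t * wf s t) I.
Proof.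
intros Hs. set (d := s / 2).
apply GI_dom with (fun t => / d * (wf (s + d) t + wf (s + - d) t)) (/ d * (Gamma_fun (s + d) + Gamma_fun (s + - d))).
- apply lnw_cont.
- intros x Hx. apply (continuous_scal_r (V:=R_NormedModule)). apply (Pcont_plus _ _ (wf_cont _) (wf_cont _)); auto.
- intros t Ht. rewrite !wf_shift; auto. rewrite Rabs_mult, (Rabs_pos_eq (wf s t)) by (left; apply wf_pos).
  pose proof (ln_bound d t ltac:(unfold d; lra) Ht). pose proof (wf_pos s t).
  replace (- d * ln t) with (- (d * ln t)) by ring.
  apply Rmult_le_reg_l with d. unfold d; lra. field_simplify. 2: unfold d; lra. nra.
- apply GI_scal. apply GI_plus; apply Gamma_GI; unfold d; lra.
Qed.

Definition lnI s : R := RInt_gen (fun t => ln t * wf s t) (at_right 0) (Rbar_locally p_infty).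

Lemma lnI_GI s : 0 < s -> GI (fun t => ln t * wf s t) (lnI s).
Proof. intros Hs. destruct (lnw_ex s Hs) as [I HI]. unfold lnI. rewrite (GI_RInt_gen _ _ HI). auto. Qed.

Lemma cube_ineq X Y : 0 <= X -> 0 <= Y -> (X + Y) * (X + Y) * (X + Y) <= 4 * (X * X * X + Y * Y * Y).
Proof. intros. assert (H3: 0 <= (X+Y)*((X-Y)*(X-Y))).
apply Rmult_le_pos. lra. apply Rle_0_sqr.
assert (E: 4*(X*X*X+Y*Y*Y) - (X+Y)*(X+Y)*(X+Y) = 3*((X+Y)*((X-Y)*(X-Y)))) by ring. lra. Qed.

Lemma Gamma_taylor s h : 0 < s -> Rabs h <= s / 4 ->
  0 <= Gamma_fun (s + h) - Gamma_fun s - h * lnI s <=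
  h * h * (4 / ((s/4) * (s/4)) * (Gamma_fun (s + 3 * (s/4)) + Gamma_fun (s + - (3 * (s/4))))).
Proof.
intros Hs Hh. set (d := s / 4).
assert (Hd : 0 < d) by (unfold d; lra).
assert (Hhd : Rabs h <= d) by (unfold d; lra).
assert (HG : GI (fun t => wf (s + h) t - wf s t - h * (ln t * wf s t)) (Gamma_fun (s + h) - Gamma_fun s - h * lnI s)).
{ apply GI_minus. apply GI_minus; apply Gamma_GI; apply Rabs_le_inv in Hh; unfold d in *; lra.
  apply GI_scal. apply lnI_GI; auto. }
split.
- apply GI_nonneg with (2 := HG). intros t Ht. rewrite wf_shift; auto.
  pose proof (exp_taylor (h * ln t)). pose proof (wf_pos s t). nra.
- eapply GI_le; [ | exact HG | ].
  2:{ apply GI_scal. apply GI_scal. apply GI_plus; apply Gamma_GI; unfold d; lra. }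
  simpl.
  intros t Ht. rewrite !wf_shift; auto.
  pose proof (exp_taylor (h * ln t)) as [_ T]. pose proof (wf_pos s t) as Wp.
  set (L := ln t) in *. set (W := wf s t) in *.
  set (X := exp (d * L)). set (Y := exp (- (d * L))).
  assert (HX : 0 < X) by apply exp_pos. assert (HY : 0 < Y) by apply exp_pos.
  assert (E3 : exp (3 * d * L) = X * X * X).
  { unfold X. rewrite <- !exp_plus. f_equal. ring. }
  assert (E3' : exp (- (3 * d) * L) = Y * Y * Y).
  { unfold Y. rewrite <- !exp_plus. f_equal. ring. }
  replace (3 * (s / 4)) with (3 * d) by (unfold d; ring).
  replace (s / 4) with d by (unfold d; ring).
  replace (3 * d * L) with (3 * d * L) by ring. rewrite E3. rewrite E3'.
  assert (Hb : d * Rabs L <= X + Y) by (apply ln_bound; auto).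
  assert (Hexp : exp (Rabs (h * L)) <= X + Y).
  { rewrite Rabs_mult. destruct (Rle_dec 0 L).
    - apply Rle_trans with X. unfold X. apply exp_le. rewrite (Rabs_pos_eq L) by auto.
      apply Rmult_le_compat_r; auto. lra.
    - apply Rle_trans with Y. unfold Y. apply exp_le. rewrite (Rabs_left L) by lra.
      assert (Rabs h * - L <= d * - L) by (apply Rmult_le_compat_r; lra). lra. lra. }
  assert (Hsq : (h * L) * (h * L) <= h * h * ((X + Y) * (X + Y)) / (d * d)).
  { assert (Rabs L * Rabs L <= (X + Y) * (X + Y) / (d * d)).
    { apply Rmult_le_reg_l with (d * d). nra. field_simplify. 2: lra.
      assert (0 <= d * Rabs L) by (pose proof (Rabs_pos L); nra). nra. }
    replace ((h * L) * (h * L)) with (h * h * (Rabs L * Rabs L)).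
    2: { rewrite <- Rabs_mult. rewrite Rabs_pos_eq. ring. nra. }
    unfold Rdiv in *. apply Rle_trans with (h*h*((X+Y)*(X+Y)*/(d*d))).
    apply Rmult_le_compat_l. nra. lra. right; ring. }
  assert (Hcube : (X + Y) * (X + Y) * (X + Y) <= 4 * (X * X * X + Y * Y * Y)).
  { apply cube_ineq; lra. }
  assert (Hmain : exp (h * L) - 1 - h * L <= 4 / (d * d) * h * h * (X * X * X + Y * Y * Y)).
  { eapply Rle_trans. apply T.
    apply Rle_trans with (h * h * ((X + Y) * (X + Y)) / (d * d) * (X + Y)).
    apply Rmult_le_compat; auto. nra. left; apply exp_pos.
    apply Rle_trans with (h * h / (d * d) * ((X + Y) * (X + Y) * (X + Y))).
    right. field. lra.
    apply Rle_trans with (h * h / (d * d) * (4 * (X * X * X + Y * Y * Y))).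
    apply Rmult_le_compat_l. apply Rmult_le_pos. nra. left; apply Rinv_0_lt_compat; nra. auto.
    right. field. lra. }
  replace (exp (h * L) * W - W - h * (L * W)) with ((exp (h * L) - 1 - h * L) * W) by ring.
  apply Rle_trans with (4 / (d * d) * h * h * (X * X * X + Y * Y * Y) * W).
  apply Rmult_le_compat_r; lra. right. ring.
Qed.

Lemma Gamma_derive s : 0 < s -> Derive Gamma_fun s = lnI s.
Proof.
intros Hs. apply is_derive_unique. apply is_derive_Reals.
set (C := 4 / ((s/4) * (s/4)) * (Gamma_fun (s + 3 * (s/4)) + Gamma_fun (s + - (3 * (s/4))))).
assert (HC : 0 <= C).
{ unfold C. apply Rmult_le_pos. apply Rdiv_le_0_compat. lra. nra.
  pose proof (Gamma_pos (s + 3 * (s/4))). pose proof (Gamma_pos (s + - (3 * (s/4)))). 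
  assert (0 < s + 3 * (s / 4)) by lra. assert (0 < s + - (3 * (s / 4))) by lra. 
  specialize (H H1). specialize (H0 H2). lra. }
intros eps He.
assert (Hdp : 0 < Rmin (s / 4) (eps / (C + 1))).
{ apply Rmin_pos. lra. apply Rdiv_lt_0_compat; lra. }
exists (mkposreal _ Hdp). intros h Hh0 Hh. simpl in Hh.
assert (Hh1 : Rabs h <= s / 4) by (pose proof (Rmin_l (s/4) (eps / (C + 1))); lra).
assert (Hh2 : Rabs h < eps / (C + 1)) by (pose proof (Rmin_r (s/4) (eps / (C + 1))); lra).
pose proof (Gamma_taylor s h Hs Hh1) as [T1 T2]. fold C in T2.
assert (Habs : 0 < Rabs h) by (apply Rabs_pos_lt; auto).
replace ((Gamma_fun (s + h) - Gamma_fun s) / h - lnI s) with ((Gamma_fun (s + h) - Gamma_fun s - h * lnI s) / h) by (field; auto).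
unfold Rdiv. rewrite Rabs_mult, Rabs_inv, (Rabs_pos_eq (_ - _ - _)) by lra.
apply Rmult_lt_reg_r with (Rabs h); auto. rewrite Rmult_assoc, Rinv_l by lra. rewrite Rmult_1_r.
assert (h * h = Rabs h * Rabs h). { rewrite <- Rabs_mult. rewrite Rabs_pos_eq. auto. nra. }
rewrite H in T2.
assert (Rabs h * (C + 1) < eps).
{ apply Rmult_lt_reg_r with (/ (C + 1)). apply Rinv_0_lt_compat; lra.
  rewrite Rmult_assoc, Rinv_r by lra. rewrite Rmult_1_r. exact Hh2. }
nra.
Qed.

Lemma digamma_eq s : 0 < s -> digamma s = lnI s / Gamma_fun s.
Proof. intros Hs. unfold digamma. rewrite Gamma_derive; auto. Qed.

Lemma ln_diff_le a b : 0 < a -> 0 < b -> ln a - ln b <= a / b - 1.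
Proof.
intros Ha Hb. pose proof (ln_le_sub1 (a / b) ltac:(apply Rdiv_lt_0_compat; auto)).
unfold Rdiv in *. rewrite ln_mult, ln_Rinv in H; auto. apply Rinv_0_lt_compat; auto.
Qed.

Lemma Jf_cont t0 k : 0 <= t0 -> Pcont (fun y => ln (1 + t0 * y) * wf k y).
Proof.
intros Ht x Hx. apply (ex_derive_continuous (V:=R_NormedModule)). unfold wf, Rpower. auto_derive.
split. nra. split; auto.
Qed.

Lemma J_ex t0 k : 0 <= t0 -> 0 < k -> exists J, GI (fun y => ln (1 + t0 * y) * wf k y) J.
Proof.
intros Ht Hk.
apply GI_dom with (fun y => t0 * wf (k + 1) y) (t0 * Gamma_fun (k + 1)).
- apply Jf_cont; auto.
- intros x Hx. apply (continuous_scal_r (V:=R_NormedModule)). apply wf_cont; auto.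
- intros y Hy. rewrite wf_shift by auto. rewrite Rmult_1_l, exp_ln by auto.
  pose proof (wf_pos k y).
  assert (0 <= ln (1 + t0 * y)). { rewrite <- ln_1. apply ln_le; nra. }
  assert (ln (1 + t0 * y) <= t0 * y). { pose proof (ln_le_sub1 (1 + t0 * y) ltac:(nra)). lra. }
  rewrite Rabs_pos_eq by (apply Rmult_le_pos; lra).
  replace (t0 * (y * wf k y)) with ((t0 * y) * wf k y) by ring. apply Rmult_le_compat_r; lra.
- apply GI_scal. apply Gamma_GI. lra.
Qed.

Definition Jv t0 k : R := RInt_gen (fun y => ln (1 + t0 * y) * wf k y) (at_right 0) (Rbar_locally p_infty).

Lemma Jv_GI t0 k : 0 <= t0 -> 0 < k -> GI (fun y => ln (1 + t0 * y) * wf k y) (Jv t0 k).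
Proof. intros Ht Hk. destruct (J_ex t0 k Ht Hk) as [J HJ]. unfold Jv. rewrite (GI_RInt_gen _ _ HJ). auto. Qed.

Lemma tangent_low c r : 0 <= c -> 0 < r -> ln (1 + c) + c / (1 + c) * ln r <= ln (1 + c * r).
Proof.
intros Hc Hr. set (a := 1 + c * r). set (b := 1 + c).
assert (Ha : 0 < a) by (unfold a; nra). assert (Hb : 0 < b) by (unfold b; lra).
pose proof (ln_diff_le b a Hb Ha) as H1.
pose proof (ln_diff_le (r * b) a ltac:(nra) Ha) as H2. rewrite ln_mult in H2 by auto.
assert (H3 : c * (ln r + ln b - ln a) <= c * (r * b / a - 1)) by (apply Rmult_le_compat_l; lra).
assert (E : b / a - 1 + c * (r * b / a - 1) = 0) by (unfold b; field_simplify_eq; [unfold a; ring | lra]).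
assert (H4 : (1 + c) * (ln b - ln a) + c * ln r <= 0) by lra.
apply Rmult_le_reg_l with (1 + c). lra.
unfold a, b in *.
replace ((1 + c) * (ln (1 + c) + c / (1 + c) * ln r)) with ((1 + c) * ln (1 + c) + c * ln r) by (field; lra).
lra.
Qed.

Lemma ln2_pos : 0 < ln 2.
Proof. rewrite <- ln_1. apply ln_increasing; lra. Qed.

Lemma ln2_le1 : ln 2 <= 1.
Proof. pose proof (exp_ineq1 1 ltac:(lra)). rewrite <- (ln_exp 1). left. apply ln_increasing; lra. Qed.

Lemma J_lower t0 k : 0 <= t0 -> 0 < k ->
  Gamma_fun k * ln (1 + t0 * exp (lnI k / Gamma_fun k)) <= Jv t0 k.
Proof.
intros Ht Hk. set (G := Gamma_fun k). set (m := lnI k / G). set (c := t0 * exp m).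
assert (HG : 0 < G) by (apply Gamma_pos; auto).
assert (Hc : 0 <= c) by (unfold c; pose proof (exp_pos m); nra).
set (B := c / (1 + c)).
assert (Hlow : GI (fun y => (ln (1 + c) - B * m) * wf k y + B * (ln y * wf k y))
                  ((ln (1 + c) - B * m) * G + B * lnI k)).
{ apply GI_plus; apply GI_scal. apply Gamma_GI; auto. apply lnI_GI; auto. }
replace (G * ln (1 + c)) with ((ln (1 + c) - B * m) * G + B * lnI k).
2: { unfold m. field. lra. }
eapply GI_le; [ | exact Hlow | apply Jv_GI; auto ].
intros y Hy. simpl.
pose proof (tangent_low c (y * exp (- m)) Hc ltac:(pose proof (exp_pos (- m)); nra)) as T.
rewrite ln_mult, ln_exp in T by (auto; apply exp_pos).
replace (c * (y * exp (- m))) with (t0 * y) in T.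
2: { unfold c. replace (t0 * exp m * (y * exp (- m))) with (t0 * y * (exp m * exp (- m))) by ring.
     rewrite <- exp_plus. replace (m + - m) with 0 by ring. rewrite exp_0. ring. }
pose proof (wf_pos k y). fold B in T.
replace ((ln (1 + c) - B * m) * wf k y + B * (ln y * wf k y)) with ((ln (1 + c) + B * (ln y + - m)) * wf k y) by ring.
apply Rmult_le_compat_r; lra.
Qed.

Lemma J_upper t0 k : 0 <= t0 -> 0 < k -> Jv t0 k <= Gamma_fun k * ln (1 + t0 * k).
Proof.
intros Ht Hk. set (G := Gamma_fun k). set (b := 1 + t0 * k).
assert (Hb : 0 < b) by (unfold b; nra).
assert (Hup : GI (fun y => (ln b - t0 * k / b) * wf k y + t0 / b * wf (k + 1) y)
                  ((ln b - t0 * k / b) * G + t0 / b * Gamma_fun (k + 1))).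
{ apply GI_plus; apply GI_scal; apply Gamma_GI; lra. }
rewrite Gamma_rec in Hup by auto. fold G in Hup.
replace (G * ln b) with ((ln b - t0 * k / b) * G + t0 / b * (k * G)) by (field; lra).
eapply GI_le; [ | apply Jv_GI; auto | exact Hup ].
intros y Hy. simpl. rewrite wf_shift by auto. rewrite Rmult_1_l, exp_ln by auto.
pose proof (ln_diff_le (1 + t0 * y) b ltac:(nra) Hb) as T.
pose proof (wf_pos k y).
replace ((ln b - t0 * k / b) * wf k y + t0 / b * (y * wf k y)) with ((ln b + (t0 * y - t0 * k) / b) * wf k y) by (field; lra).
apply Rmult_le_compat_r. lra.
assert (Hbne : 1 + t0 * k <> 0) by (unfold b in Hb; lra).
replace ((1 + t0 * y) / b - 1) with ((t0 * y - t0 * k) / b) in T by (unfold b; field; exact Hbne). lra.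
Qed.

Lemma psi_upper k : 0 < k -> lnI k <= Gamma_fun k * ln k.
Proof.
intros Hk. set (G := Gamma_fun k).
assert (Hup : GI (fun y => (ln k - 1) * wf k y + / k * wf (k + 1) y)
                  ((ln k - 1) * G + / k * Gamma_fun (k + 1))).
{ apply GI_plus; apply GI_scal; apply Gamma_GI; lra. }
rewrite Gamma_rec in Hup by auto. fold G in Hup.
replace (G * ln k) with ((ln k - 1) * G + / k * (k * G)) by (field; lra).
eapply GI_le; [ | apply lnI_GI; auto | exact Hup ].
intros y Hy. simpl. rewrite wf_shift by auto. rewrite Rmult_1_l, exp_ln by auto.
pose proof (ln_diff_le y k Hy Hk) as T.
pose proof (wf_pos k y).
replace ((ln k - 1) * wf k y + / k * (y * wf k y)) with ((ln k - 1 + y / k) * wf k y) by (field; lra).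
apply Rmult_le_compat_r; lra.
Qed.

Lemma psi_lower k : 1 < k -> Gamma_fun k * (ln k - / (k - 1)) <= lnI k.
Proof.
intros Hk. set (G := Gamma_fun k).
assert (Hlo : GI (fun y => (ln k + 1) * wf k y + - k * wf (k + - 1) y)
                  ((ln k + 1) * G + - k * Gamma_fun (k + - 1))).
{ apply GI_plus; apply GI_scal; apply Gamma_GI; lra. }
assert (Hrec : G = (k - 1) * Gamma_fun (k + - 1)).
{ unfold G. replace k with ((k + - 1) + 1) at 1 by ring. apply Gamma_rec. lra. }
replace (G * (ln k - / (k - 1))) with ((ln k + 1) * G + - k * Gamma_fun (k + - 1)).
2: { rewrite Hrec. field. lra. }
eapply GI_le; [ | exact Hlo | apply lnI_GI; lra ].
intros y Hy. simpl. rewrite wf_shift by auto.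
replace (-1 * ln y) with (- ln y) by ring. rewrite exp_Ropp, exp_ln by auto.
pose proof (ln_diff_le k y ltac:(lra) Hy) as T.
pose proof (wf_pos k y).
replace ((ln k + 1) * wf k y + - k * (/ y * wf k y)) with ((ln k + 1 - k / y) * wf k y) by (field; lra).
apply Rmult_le_compat_r; lra.
Qed.

Lemma lnz_bound s z : 0 < s <= 1 -> 0 < z -> ln (1 + z) <= (1 + / s) * exp (s * ln z).
Proof.
intros Hs Hz.
assert (Hinv : 0 < / s) by (apply Rinv_0_lt_compat; lra).
pose proof (exp_pos (s * ln z)) as Hep.
destruct (Rle_dec z 1).
- pose proof (ln_le_sub1 (1 + z) ltac:(lra)).
  assert (ln z <= 0). { rewrite <- ln_1. apply ln_le; lra. }
  assert (z <= exp (s * ln z)). { rewrite <- (exp_ln z) at 1 by auto. apply exp_le. nra. }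
  assert (0 <= / s * exp (s * ln z)) by (apply Rmult_le_pos; lra). nra.
- assert (ln (1 + z) <= ln 2 + ln z). { rewrite <- ln_mult by lra. apply ln_le; lra. }
  pose proof ln2_le1.
  assert (0 < ln z). { rewrite <- ln_1. apply ln_increasing; lra. }
  assert (1 <= exp (s * ln z)). { rewrite <- exp_0. apply exp_le. nra. }
  pose proof (exp_ineq1_le (s * ln z)).
  assert (ln z <= / s * exp (s * ln z)).
  { apply Rmult_le_reg_l with s. lra. rewrite <- Rmult_assoc, Rinv_r, Rmult_1_l by lra. lra. }
  nra.
Qed.

Lemma J_upper2 t0 k : 0 < t0 -> 0 < k ->
  Jv t0 k <= Gamma_fun k * ln t0 + lnI k +
     (1 + / (k / (2 * k + 2))) * exp (- (k / (2 * k + 2)) * ln t0) * Gamma_fun (k + - (k / (2 * k + 2))).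
Proof.
intros Ht Hk. set (s := k / (2 * k + 2)).
assert (Hs : 0 < s <= 1 /\ s < k).
{ unfold s. split. split. apply Rdiv_lt_0_compat; lra.
  apply Rmult_le_reg_r with (2 * k + 2). lra. field_simplify; lra.
  apply Rmult_lt_reg_r with (2 * k + 2). lra. field_simplify; nra. }
set (C := (1 + / s) * exp (- s * ln t0)).
assert (Hup : GI (fun y => ln t0 * wf k y + ln y * wf k y + C * wf (k + - s) y)
                  (ln t0 * Gamma_fun k + lnI k + C * Gamma_fun (k + - s))).
{ apply GI_plus. apply GI_plus. apply GI_scal; apply Gamma_GI; lra. apply lnI_GI; lra.
  apply GI_scal; apply Gamma_GI; lra. }
replace (Gamma_fun k * ln t0 + lnI k + C * Gamma_fun (k + - s)) with (ln t0 * Gamma_fun k + lnI k + C * Gamma_fun (k + - s)) by ring.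
eapply GI_le; [ | apply Jv_GI; lra | exact Hup ].
intros y Hy. simpl. rewrite (wf_shift k (- s) y Hy).
pose proof (wf_pos k y).
set (z := / (t0 * y)).
assert (Hz : 0 < z) by (unfold z; apply Rinv_0_lt_compat; nra).
assert (E1 : 1 + t0 * y = t0 * y * (1 + z)) by (unfold z; field; nra).
assert (E2 : ln z = - (ln t0 + ln y)) by (unfold z; rewrite ln_Rinv, ln_mult; auto; nra).
pose proof (lnz_bound s z (proj1 Hs) Hz) as T.
rewrite E2 in T.
assert (E3 : exp (s * - (ln t0 + ln y)) = exp (- s * ln t0) * exp (- s * ln y)).
{ rewrite <- exp_plus. f_equal. ring. }
rewrite E3 in T.
rewrite E1, ln_mult, ln_mult by (auto; nra).
replace (ln t0 * wf k y + ln y * wf k y + C * (exp (- s * ln y) * wf k y)) with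
  ((ln t0 + ln y + (1 + / s) * (exp (- s * ln t0) * exp (- s * ln y))) * wf k y) by (unfold C; ring).
apply Rmult_le_compat_r; lra.
Qed.

Lemma Ec_eq k g p d2 : 0 < k -> 0 < g -> 0 <= p -> 0 < d2 ->
  Ec k g p d2 = Jv (p / d2 * (g / k)) k / (Gamma_fun k * ln 2).
Proof.
intros Hk Hg Hp Hd. set (th := g / k). assert (Hth : 0 < th) by (unfold th; apply Rdiv_lt_0_compat; auto).
set (t0 := p / d2 * th). assert (Ht0 : 0 <= t0) by (unfold t0; apply Rmult_le_pos; [apply Rdiv_le_0_compat|]; lra).
assert (HG : 0 < Gamma_fun k) by (apply Gamma_pos; auto).
pose proof ln2_pos.
unfold Ec, gamma_expect. apply GI_RInt_gen.
apply GI_scale with th; auto.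
apply GI_ext with (fun y => / (Gamma_fun k * ln 2) * (ln (1 + t0 * y) * wf k y)).
2: { replace (Jv t0 k / (Gamma_fun k * ln 2)) with (/ (Gamma_fun k * ln 2) * Jv t0 k) by (field; lra).
     apply GI_scal. apply Jv_GI; auto. }
intros y Hy. unfold capacity, log2, gamma_pdf, wf. fold th.
assert (R1 : Rpower (th * y) (k - 1) = Rpower th (k - 1) * Rpower y (k - 1)).
{ unfold Rpower. rewrite ln_mult by auto. rewrite <- exp_plus. f_equal. ring. }
assert (R2 : Rpower th k = th * Rpower th (k - 1)).
{ unfold Rpower. rewrite <- (exp_ln th) at 2 by auto. rewrite <- exp_plus. f_equal. ring. }
rewrite R1, R2.
assert (HA : 0 < Rpower th (k - 1)) by (unfold Rpower; apply exp_pos).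
replace (- (th * y) / th) with (- y) by (field; lra).
replace (p * (th * y) / d2) with (t0 * y) by (unfold t0; field; lra).
field. repeat split; lra.
Qed.

Lemma cbar_eq k g p d2 : 0 < k -> 0 < g -> 0 <= p -> 0 < d2 ->
  cbar k g p d2 = ln (1 + p / d2 * (g / k) * exp (lnI k / Gamma_fun k)) / ln 2.
Proof.
intros Hk Hg Hp Hd. unfold cbar, log2, beta, gbar. rewrite digamma_eq by auto.
f_equal. f_equal. field. lra.
Qed.

Lemma part1 k g p d2 : 0 < k -> 0 < g -> 0 <= p -> 0 < d2 -> cbar k g p d2 <= Ec k g p d2.
Proof.
intros Hk Hg Hp Hd. rewrite Ec_eq, cbar_eq by auto.
set (t0 := p / d2 * (g / k)).
assert (Ht0 : 0 <= t0) by (unfold t0; apply Rmult_le_pos; [apply Rdiv_le_0_compat| left; apply Rdiv_lt_0_compat]; lra).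
pose proof (J_lower t0 k Ht0 Hk). pose proof ln2_pos. pose proof (Gamma_pos k Hk).
replace (Jv t0 k / (Gamma_fun k * ln 2)) with ((Jv t0 k / Gamma_fun k) / ln 2) by (field; lra).
unfold Rdiv; apply Rmult_le_compat_r; [left; apply Rinv_0_lt_compat; lra|].
apply Rmult_le_reg_l with (Gamma_fun k); auto.
replace (Gamma_fun k * (Jv t0 k * / Gamma_fun k)) with (Jv t0 k) by (field; lra). lra.
Qed.

Lemma diff_eq k g p d2 : 0 < k -> 0 < g -> 0 <= p -> 0 < d2 ->
  Ec k g p d2 - cbar k g p d2 =
  (Jv (p / d2 * (g / k)) k / Gamma_fun k - ln (1 + p / d2 * (g / k) * exp (lnI k / Gamma_fun k))) / ln 2.
Proof.
intros Hk Hg Hp Hd. rewrite Ec_eq, cbar_eq by auto. pose proof ln2_pos. pose proof (Gamma_pos k Hk).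
field. lra.
Qed.

Lemma part3_bound k g p d2 : 1 < k -> 0 < g -> 0 <= p -> 0 < d2 ->
  Ec k g p d2 - cbar k g p d2 <= / (k - 1) / ln 2.
Proof.
intros Hk Hg Hp Hd. rewrite diff_eq by (auto; lra).
set (t0 := p / d2 * (g / k)).
assert (Ht0 : 0 <= t0) by (unfold t0; apply Rmult_le_pos; [apply Rdiv_le_0_compat| left; apply Rdiv_lt_0_compat]; lra).
pose proof ln2_pos. assert (HG : 0 < Gamma_fun k) by (apply Gamma_pos; lra).
set (m := lnI k / Gamma_fun k).
assert (HJ : Jv t0 k / Gamma_fun k <= ln (1 + t0 * k)).
{ pose proof (J_upper t0 k Ht0 ltac:(lra)). apply Rmult_le_reg_l with (Gamma_fun k); auto.
  unfold Rdiv. rewrite <- Rmult_assoc, (Rmult_comm (Gamma_fun k) (Jv t0 k)), Rmult_assoc, Rinv_r, Rmult_1_r by lra. lra. }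
assert (Hm : ln k - / (k - 1) <= m).
{ pose proof (psi_lower k Hk). unfold m. apply Rmult_le_reg_l with (Gamma_fun k); auto.
  unfold Rdiv. rewrite <- Rmult_assoc, (Rmult_comm (Gamma_fun k) (lnI k)), Rmult_assoc, Rinv_r, Rmult_1_r by lra. lra. }
set (e := / (k - 1)).
assert (He : 0 < e) by (unfold e; apply Rinv_0_lt_compat; lra).
assert (Hem : k <= exp e * exp m).
{ rewrite <- exp_plus. rewrite <- (exp_ln k) at 1 by lra. apply exp_le. fold e in Hm. lra. }
assert (He1 : 1 <= exp e) by (rewrite <- exp_0; apply exp_le; lra).
assert (Hl : ln (1 + t0 * k) <= e + ln (1 + t0 * exp m)).
{ rewrite <- (ln_exp e) at 1. rewrite <- ln_mult by (try apply exp_pos; pose proof (exp_pos m); nra).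
  apply ln_le. nra. pose proof (exp_pos m). nra. }
apply Rmult_le_reg_r with (ln 2); auto. unfold Rdiv. rewrite !Rmult_assoc, Rinv_l, !Rmult_1_r by lra.
lra.
Qed.

Lemma part2_bound k g p d2 : 0 < k -> 0 < g -> 0 < p -> 0 < d2 ->
  Ec k g p d2 - cbar k g p d2 <=
  exp (- (k / (2 * k + 2)) * ln (p / d2 * (g / k))) *
  ((1 + / (k / (2 * k + 2))) * Gamma_fun (k + - (k / (2 * k + 2))) / Gamma_fun k / ln 2).
Proof.
intros Hk Hg Hp Hd. rewrite diff_eq by (auto; lra).
set (t0 := p / d2 * (g / k)).
assert (Ht0 : 0 < t0) by (unfold t0; apply Rmult_lt_0_compat; apply Rdiv_lt_0_compat; lra).
pose proof ln2_pos. assert (HG : 0 < Gamma_fun k) by (apply Gamma_pos; lra).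
set (s := k / (2 * k + 2)).
assert (Hs : 0 < s) by (unfold s; apply Rdiv_lt_0_compat; lra).
set (m := lnI k / Gamma_fun k).
pose proof (J_upper2 t0 k Ht0 Hk) as HJ. fold s in HJ.
assert (Hl : ln t0 + m <= ln (1 + t0 * exp m)).
{ rewrite <- (ln_exp m) at 1. rewrite <- ln_mult by (auto; apply exp_pos). apply ln_le.
  pose proof (exp_pos m); nra. lra. }
apply Rmult_le_reg_r with (ln 2); auto.
replace ((Jv t0 k / Gamma_fun k - ln (1 + t0 * exp m)) / ln 2 * ln 2) with (Jv t0 k / Gamma_fun k - ln (1 + t0 * exp m)) by (field; lra).
replace (exp (- s * ln t0) * ((1 + / s) * Gamma_fun (k + - s) / Gamma_fun k / ln 2) * ln 2)
  with ((1 + / s) * exp (- s * ln t0) * Gamma_fun (k + - s) / Gamma_fun k) by (field; lra).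
assert (Jv t0 k / Gamma_fun k <= ln t0 + m + (1 + / s) * exp (- s * ln t0) * Gamma_fun (k + - s) / Gamma_fun k).
{ apply Rmult_le_reg_l with (Gamma_fun k); auto. unfold m.
  replace (Gamma_fun k * (Jv t0 k / Gamma_fun k)) with (Jv t0 k) by (field; lra).
  replace (Gamma_fun k * (ln t0 + lnI k / Gamma_fun k + (1 + / s) * exp (- s * ln t0) * Gamma_fun (k + - s) / Gamma_fun k))
    with (Gamma_fun k * ln t0 + lnI k + (1 + / s) * exp (- s * ln t0) * Gamma_fun (k + - s)) by (field; lra).
  lra. }
lra.
Qed.

Theorem lemma1 (kappa g p d2 : R) (hk : 0 < kappa) (hg : 0 < g) (hp : 0 <= p)
  (hd : 0 < d2) :
  (* the lower bound *)
  cbar kappa g p d2 <= Ec kappa g p d2 /\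
  (* tightness as gbar -> oo (kappa fixed) *)
  (forall eps : R, 0 < eps -> exists M : R, forall g' p' d2' : R,
     0 < g' -> 0 <= p' -> 0 < d2' -> M < gbar g' p' d2' ->
     Rabs (Ec kappa g' p' d2' - cbar kappa g' p' d2') < eps) /\
  (* tightness as kappa -> oo (g, p, d2 fixed) *)
  is_lim (fun k => Ec k g p d2 - cbar k g p d2) p_infty 0.
Proof.
split. apply part1; auto.
split.
- intros eps He.
  set (s := kappa / (2 * kappa + 2)).
  assert (Hs : 0 < s) by (unfold s; apply Rdiv_lt_0_compat; lra).
  assert (Hs1 : s < kappa) by (unfold s; apply Rmult_lt_reg_r with (2 * kappa + 2); [lra|]; field_simplify; nra).
  pose proof ln2_pos. assert (HG : 0 < Gamma_fun kappa) by (apply Gamma_pos; lra).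
  assert (HG2 : 0 < Gamma_fun (kappa + - s)) by (apply Gamma_pos; lra).
  set (C0 := (1 + / s) * Gamma_fun (kappa + - s) / Gamma_fun kappa / ln 2).
  assert (HC0 : 0 < C0).
  { unfold C0. repeat apply Rdiv_lt_0_compat; auto. apply Rmult_lt_0_compat; auto.
    pose proof (Rinv_0_lt_compat s Hs). lra. }
  exists (kappa * exp (- ln (eps / C0) / s)).
  intros g' p' d2' Hg' Hp' Hd' HM.
  pose proof (exp_pos (- ln (eps / C0) / s)).
  assert (Hp'' : 0 < p').
  { destruct Hp' as [Hp'|Hp']; auto. subst p'. unfold gbar in HM.
    replace (0 * g' / d2') with 0 in HM by (field; lra). nra. }
  pose proof (part1 kappa g' p' d2' hk Hg' Hp' Hd').
  pose proof (part2_bound kappa g' p' d2' hk Hg' Hp'' Hd') as B. fold s in B. fold C0 in B.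
  rewrite Rabs_pos_eq by lra.
  set (t0 := p' / d2' * (g' / kappa)) in B.
  assert (Ht0 : exp (- ln (eps / C0) / s) < t0).
  { unfold t0. unfold gbar in HM.
    apply Rmult_lt_reg_l with kappa; auto.
    replace (kappa * (p' / d2' * (g' / kappa))) with (p' * g' / d2') by (field; lra). lra. }
  assert (Hl : - ln (eps / C0) / s < ln t0).
  { rewrite <- (ln_exp (- ln (eps / C0) / s)). apply ln_increasing; auto. }
  assert (Hl2 : - s * ln t0 < ln (eps / C0)).
  { apply Rmult_lt_compat_l with (r := s) in Hl; auto.
    replace (s * (- ln (eps / C0) / s)) with (- ln (eps / C0)) in Hl by (field; lra). lra. }
  assert (H3 : exp (- s * ln t0) < eps / C0).
  { rewrite <- (exp_ln (eps / C0)) by (apply Rdiv_lt_0_compat; auto). apply exp_increasing; auto. }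
  assert (exp (- s * ln t0) * C0 < eps).
  { apply Rmult_lt_compat_r with (r := C0) in H3; auto.
    replace (eps / C0 * C0) with eps in H3 by (field; lra). auto. }
  lra.
- apply is_lim_spec. intros eps.
  pose proof ln2_pos.
  assert (Hep : 0 < eps * ln 2) by (apply Rmult_lt_0_compat; auto; apply cond_pos).
  exists (1 + / (eps * ln 2)). intros k Hk.
  pose proof (Rinv_0_lt_compat _ Hep).
  assert (Hk1 : 1 < k) by lra.
  pose proof (part1 k g p d2 ltac:(lra) hg hp hd).
  pose proof (part3_bound k g p d2 Hk1 hg hp hd).
  rewrite Rminus_0_r. rewrite Rabs_pos_eq by lra.
  assert (/ (k - 1) < eps * ln 2).
  { rewrite <- (Rinv_inv (eps * ln 2)). apply Rinv_lt_contravar. apply Rmult_lt_0_compat; lra. lra. }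
  assert (/ (k - 1) / ln 2 < eps).
  { apply Rmult_lt_reg_r with (ln 2); auto. unfold Rdiv. rewrite Rmult_assoc, Rinv_l, Rmult_1_r by lra. lra. }
  lra.
Qed.
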